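(* Let $1\le p,q<\infty$, $\theta>0$ and $\varepsilon_0\in(0,\infty)$. For $g\in l^{q),\theta}(L^p)$ define $$\|g\|_{p,q),\theta,\varepsilon_0}:=\sup_{0<\varepsilon\le\varepsilon_0}\varepsilon^{\frac{\theta}{q(1+\varepsilon)}}\|g\|_{l^{q(1+\varepsilon)}(L^p)}.$$ Then $\|\cdot\|_{p,q),\theta}$ and $\|\cdot\|_{p,q),\theta,\varepsilon_0}$ are equivalent norms; more precisely, for every such $g$, $$\|g\|_{p,q),\theta,\varepsilon_0}\le\|g\|_{p,q),\theta}\le (c(\varepsilon_0))^{\frac{\theta}{q}}\|g\|_{p,q),\theta,\varepsilon_0},\qquad c(\varepsilon_0)=\frac{1}{\mathrm e\,W(1/\mathrm e)}\,\varepsilon_0^{-\frac{1}{1+\varepsilon_0}},$$ where $W$ is the Lambert function.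
   Context: Let $X$ be one of $\mathbb N,\mathbb N_0,\mathbb Z$ and $I_k=[k,k+1)$ for $k\in X$. For $1\le r<\infty$ and $1\le p<\infty$, $\|g\|_{l^{r}(L^p)}:=\Big(\sum_{k\in X}\Big(\int_{I_k}|g|^p\,dx\Big)^{r/p}\Big)^{1/r}$. The space $l^{q),\theta}(L^p)$ consists of complex-valued measurable $g$ on $\bigcup_{k\in X}I_k$ with $g\chi_{I_k}\in L^p$ for all $k$ and $\|g\|_{p,q),\theta}:=\sup_{\varepsilon>0}\varepsilon^{\frac{\theta}{q(1+\varepsilon)}}\|g\|_{l^{q(1+\varepsilon)}(L^p)}<\infty$. The Lambert function $W$ is the inverse of $y\mapsto y\mathrm e^y$ on $(0,\infty)$. *)

(* Defs.v *)
From HB Require Import structures.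
From mathcomp Require Import all_boot all_order all_algebra.
From mathcomp Require Import all_classical all_reals all_analysis.
From mathcomp Require complex.
Set Implicit Arguments. Unset Strict Implicit. Unset Printing Implicit Defensive.
Import Order.TTheory GRing.Theory Num.Theory.
Local Open Scope classical_set_scope.
Local Open Scope ring_scope.

Inductive Xkind := XN | XN0 | XZ.

Definition Xset (X : Xkind) : set int :=
  match X with
  | XN => [set k : int | (1 <= k)%R]
  | XN0 => [set k : int | (0 <= k)%R]
  | XZ => [set: int]
  end.

Definition Ik {R : realType} (k : int) : set R := `[k%:~R, k%:~R + 1[%classic.

Definition domX {R : realType} (X : Xkind) : set R :=
  \bigcup_(k in Xset X) Ik k.

Definition cabs {R : realType} (z : complex.complex R) : R :=
  Num.sqrt (complex.Re z ^+ 2 + complex.Im z ^+ 2).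

Definition locLp {R : realType} (p : R) (g : R -> complex.complex R) (k : int)
  : \bar R :=
  (\int[@lebesgue_measure R]_(x in Ik k) ((cabs (g x)) `^ p)%:E)%E.

Definition lrLp {R : realType} (X : Xkind) (r p : R) (g : R -> complex.complex R)
  : \bar R :=
  ((\esum_(k in Xset X) (locLp p g k `^ (r / p))) `^ (1 / r))%E.

Definition grandNorm {R : realType} (X : Xkind) (p q theta : R)
  (g : R -> complex.complex R) : \bar R :=
  ereal_sup [set ((eps `^ (theta / (q * (1 + eps))))%:E
                  * lrLp X (q * (1 + eps)) p g)%E | eps in `]0, +oo[%classic].

Definition grandNormLoc {R : realType} (X : Xkind) (p q theta eps0 : R)
  (g : R -> complex.complex R) : \bar R :=
  ereal_sup [set ((eps `^ (theta / (q * (1 + eps))))%:E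
                  * lrLp X (q * (1 + eps)) p g)%E | eps in `]0, eps0]%classic].

Definition in_grand {R : realType} (X : Xkind) (p q theta : R)
  (g : R -> complex.complex R) : Prop :=
  [/\ measurable_fun (domX X) (fun x => complex.Re (g x)),
      measurable_fun (domX X) (fun x => complex.Im (g x)),
      (forall k, Xset X k -> (locLp p g k < +oo)%E) &
      (grandNorm X p q theta g < +oo)%E].

(* Lambert function: W y is the unique w > 0 with w e^w = y (for y > 0). *)
Definition LambertW {R : realType} (y : R) : R :=
  xget 0 [set w : R | 0 < w /\ w * expR w = y].

Definition c_eps0 {R : realType} (eps0 : R) : R :=
  (expR 1 * LambertW (expR 1)^-1)^-1 * eps0 `^ (- (1 / (1 + eps0))).

(* Main.v *)
Require Import Defs.
From HB Require Import structures.
From mathcomp Require Import all_boot all_order all_algebra.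
From mathcomp Require Import all_classical all_reals all_analysis.
From mathcomp Require complex.
From mathcomp Require Import ring lra.
Import Order.TTheory GRing.Theory Num.Theory.
Import numFieldNormedType.Exports.
Local Open Scope ring_scope.

Section H.
Variable R : realType.

Lemma powR_expR (x a : R) : 0 < x -> x `^ a = expR (a * ln x).
Proof. by move=> x0; rewrite /powR gt_eqF. Qed.

Lemma lambert_ex : exists w : R, 0 < w /\ w * expR w = (expR 1)^-1.
Proof.
have e1 : (1 : R) <= expR 1 by have := expR_ge1Dx (1:R); lra.
have [c c01 fc] : exists2 c : R, c \in `[0, 1] & (fun x => x * expR x) c = (expR 1)^-1.
  apply: IVT => //.
    have cf : continuous (fun c : R => c * expR c).
      by move=> x; apply: cvgM; [exact: cvg_id | exact: continuous_expR].
    exact: continuous_subspaceT.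
  have e0 : (0:R) <= expR 1 by exact: expR_ge0.
  rewrite /= mul0r mul1r (min_l e0) (max_r e0) invr_ge0 e0 /=.
  by rewrite (le_trans _ e1)// invf_le1 ?(lt_le_trans _ e1).
exists c; split => //.
move: c01; rewrite in_itv /= => /andP[c0 _].
rewrite lt_neqAle c0 andbT; apply/eqP => c0'.
by move: fc; rewrite -c0' mul0r => /esym/eqP; rewrite invr_eq0 gt_eqF ?expR_gt0.
Qed.


Lemma KF (theta q eps0 eps : R) : 0 < theta -> 0 < q -> 0 < eps0 -> 0 < eps ->
  eps `^ (theta / (q * (1 + eps))) <=
  c_eps0 eps0 `^ (theta / q) * eps0 `^ (theta / (q * (1 + eps0))).
Proof.
move=> th0 q0 e00 e0.
have h1e0 : 0 < 1 + eps0 by lra.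
have h1e : 0 < 1 + eps by lra.
rewrite /c_eps0 /LambertW.
have := xgetPex 0 (lambert_ex); set w := xget _ _ => -[w0 hw].
have lw : ln w = -1 - w.
  have := congr1 (@ln R) hw; rewrite lnM ?posrE ?expR_gt0// expRK lnV ?posrE ?expR_gt0// expRK.
  by move=> h; rewrite -h addrK.
have ew : (expR 1 * w)^-1 = expR w.
  have : expR 1 * w = (expR w)^-1.
    have ne : expR w != 0 by rewrite gt_eqF// expR_gt0.
    have h1 : expR 1 * w * expR w = 1 by rewrite -mulrA hw mulfV// gt_eqF// expR_gt0.
    by have := mulfK ne (expR 1 * w); rewrite h1 mul1r => <-.
  by move=> ->; rewrite invrK.
rewrite ew (powR_expR _ _ e00) -expRD.
have c0 : 0 < expR (w + - (1 / (1 + eps0)) * ln eps0) by exact: expR_gt0.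
rewrite (powR_expR _ _ c0) expRK (powR_expR _ _ e00) (powR_expR _ _ e0) -expRD ler_expR.
have -> : theta / q * (w + - (1 / (1 + eps0)) * ln eps0) +
   theta / (q * (1 + eps0)) * ln eps0 = theta / q * w.
  by field; rewrite (gt_eqF q0) (gt_eqF h1e0).
have hl : ln eps <= w * (1 + eps).
  have := @le_ln1Dx R (w * eps - 1).
  rewrite addrCA subrr addr0 lnM ?posrE// ?mulr_gt0// lw.
  have -> : -1 < w * eps - 1 by rewrite ltrBrDr addrC subrr mulr_gt0.
  by move=> /(_ isT) h; rewrite mulrDr mulr1; lra.
have p0 : 0 <= theta / (q * (1 + eps)).
  by rewrite divr_ge0 ?ltW// mulr_gt0.
apply: (le_trans (ler_wpM2l p0 hl)).
rewrite le_eqVlt; apply/orP; left; apply/eqP.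
by field; rewrite (gt_eqF q0) (gt_eqF h1e).
Qed.


Local Open Scope ereal_scope.
Lemma lr_mono (A : set int) (a : int -> \bar R) (p r s : R) :
  (0 < p)%R -> (0 < r)%R -> (r <= s)%R ->
  (forall k, A k -> 0 <= a k /\ a k < +oo) ->
  (\esum_(k in A) (a k `^ (s / p))) `^ (1 / s) <=
  (\esum_(k in A) (a k `^ (r / p))) `^ (1 / r).
Proof.
move=> p0 r0 rs ha.
have s0 : (0 < s)%R by exact: lt_le_trans rs.
set S := \esum_(k in A) (a k `^ (r / p)).
have S0 : 0 <= S by apply: esum_ge0 => k _; exact: poweR_ge0.
have [Sy|Sfin] := eqVneq S +oo.
  by rewrite Sy poweRyr ?leey// div1r invr_eq0 gt_eqF.
have : S \is a fin_num by rewrite ge0_fin_numE// lt_neqAle Sfin leey.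
move=> /fineK Sx; move: S0; rewrite -Sx; set x := fine S => x0.
rewrite lee_fin in x0.
set M := (x `^ (s / r - 1))%R.
have M0 : (0 <= M)%R by exact: powR_ge0.
have key : forall k, A k -> a k `^ (s / p) <= a k `^ (r / p) * M%:E.
  move=> k Ak; have [a0 ay] := ha k Ak.
  have : a k \is a fin_num by rewrite ge0_fin_numE.
  move=> /fineK ak; rewrite -ak !poweR_EFin -EFinM lee_fin.
  set y := fine (a k).
  have y0 : (0 <= y)%R by rewrite -lee_fin ak.
  have yx : (y `^ (r / p) <= x)%R.
    rewrite -lee_fin Sx -poweR_EFin ak; apply: esum_ge.
    exists [set k]%classic; first by split; [exact: finite_set1 | move=> ? ->].
    by rewrite fsbig_set1.
  have [->|yn0] := eqVneq y 0%R.
    by rewrite powR0 ?mulr_ge0 ?powR_ge0// mulf_neq0 ?invr_eq0 ?gt_eqF.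
  have -> : (s / p = r / p + (r / p) * (s / r - 1))%R.
    by field; rewrite (gt_eqF p0) (gt_eqF r0).
  rewrite powRD ?yn0 ?implybT// (powRrM y (r / p)); apply: ler_wpM2l; first exact: powR_ge0.
  apply: ge0_ler_powR => //; last by rewrite nnegrE powR_ge0.
  by rewrite subr_ge0 ler_pdivlMr// mul1r.
have E1 : \esum_(k in A) (a k `^ (s / p)) <= (x * M)%:E.
  apply: le_trans (le_esum key) _.
  apply: ge_ereal_sup => _ [F [finF FA] <-].
  rewrite -ge0_mule_fsuml => [|i]; last exact: poweR_ge0.
  rewrite EFinM; apply: lee_wpmul2r; first by rewrite lee_fin.
  by rewrite Sx; apply: ereal_sup_ubound; exists F.
have E0 : 0 <= \esum_(k in A) (a k `^ (s / p)) by apply: esum_ge0 => k _; exact: poweR_ge0.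
have : \esum_(k in A) (a k `^ (s / p)) \is a fin_num.
  by rewrite ge0_fin_numE// (le_lt_trans E1) ?ltry.
move=> /fineK Ex; move: E1 E0; rewrite -Ex !poweR_EFin !lee_fin => E1 E0.
apply: (@le_trans _ _ ((x * M) `^ (1 / s))%R).
  apply: ge0_ler_powR => //; first by rewrite divr_ge0// ltW.
  by rewrite nnegrE mulr_ge0.
rewrite /M mulr_powRB1 ?divr_gt0// -powRrM.
by rewrite le_eqVlt; apply/orP; left; apply/eqP; congr (_ `^ _)%R; field; rewrite (gt_eqF r0) (gt_eqF s0).
Qed.

End H.

Theorem lemma2p7 (R : realType) (X : Xkind) (p q theta eps0 : R)
  (g : R -> complex.complex R) :
  1 <= p -> 1 <= q -> 0 < theta -> 0 < eps0 ->
  in_grand X p q theta g ->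
  (grandNormLoc X p q theta eps0 g <= grandNorm X p q theta g)%E /\
  (grandNorm X p q theta g
     <= (c_eps0 eps0 `^ (theta / q))%:E * grandNormLoc X p q theta eps0 g)%E.
Proof.
move=> p1 q1 th0 e00 [_ _ hfin _].
have p0 : 0 < p by exact: lt_le_trans p1.
have q0 : 0 < q by exact: lt_le_trans q1.
have aok : forall k, Xset X k -> (0 <= locLp p g k /\ locLp p g k < +oo)%E.
  move=> k Xk; split; last exact: hfin.
  by apply: integral_ge0 => x _; rewrite lee_fin powR_ge0.
have N0 : forall e, (0 <= lrLp X (q * (1 + e)) p g)%E by move=> e; exact: poweR_ge0.
split.
  apply: ereal_sup_le => _ [e he <-]; exists e => //.
  by move: he; rewrite /= !in_itv /= andbT => /andP[].
apply: ge_ereal_sup => _ [e he <-].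
have e0 : 0 < e by move: he; rewrite /= in_itv /= andbT.
set L := grandNormLoc X p q theta eps0 g.
set C := c_eps0 eps0 `^ (theta / q).
have t0L : ((eps0 `^ (theta / (q * (1 + eps0))))%:E * lrLp X (q * (1 + eps0)) p g <= L)%E.
  by apply: ereal_sup_ubound; exists eps0 => //; rewrite /= in_itv /= e00 lexx.
have L0 : (0 <= L)%E by apply: le_trans t0L; rewrite mule_ge0// lee_fin powR_ge0.
have kf := @KF R theta q eps0 e th0 q0 e00 e0.
have C0 : 0 <= C by exact: powR_ge0.
have [hee|hee] := leP e eps0.
  have C1 : 1 <= C.
    have := @KF R theta q eps0 eps0 th0 q0 e00 e00.
    by rewrite -{1}[X in X <= _ -> _]mul1r ler_pM2r ?powR_gt0.
  apply: (@le_trans _ _ L); last by rewrite lee_pemull// lee_fin.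
  by apply: ereal_sup_ubound; exists e => //; rewrite /= in_itv /= e0 hee.
have Nle : (lrLp X (q * (1 + e)) p g <= lrLp X (q * (1 + eps0)) p g)%E.
  apply: lr_mono => //; first by rewrite mulr_gt0//; lra.
  by rewrite ler_pM2l//; lra.
apply: le_trans (lee_wpmul2l _ Nle) _; first by rewrite lee_fin powR_ge0.
have kf' : ((e `^ (theta / (q * (1 + e))))%:E <= (C * eps0 `^ (theta / (q * (1 + eps0))))%:E)%E.
  by rewrite lee_fin.
apply: le_trans (lee_wpmul2r (N0 eps0) kf') _.
by rewrite EFinM -muleA; apply: lee_wpmul2l; rewrite ?lee_fin.
Qed.
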